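(* Assume (H1), (H2.1), (H2.4) and (H3.1). Then there exists a positive integer $N_{0}$ such that, for any $N\ge N_{0}$, the operator $I_{X^{+}}-\mathcal{L}_{N}^{+}\mathcal{F}_{s}V^{+}\colon X^{+}\to X^{+}$ is invertible and $$\|(I_{X^{+}}-\mathcal{L}_{N}^{+}\mathcal{F}_{s}V^{+})^{-1}\|_{X^{+}\leftarrow X^{+}}\le 2\|(I_{X^{+}}-\mathcal{F}_{s}V^{+})^{-1}\|_{X^{+}\leftarrow X^{+}}.$$ Moreover, for each $\phi\in\widehat{X}$, the equation $z=\mathcal{L}_{N}^{+}\mathcal{F}_{s}V(\phi,z)$ has a unique solution $w^{\ast}\in X^{+}$ and $$\|w^{\ast}-z^{\ast}\|_{X^{+}}\le 2\|(I_{X^{+}}-\mathcal{F}_{s}V^{+})^{-1}\|_{X^{+}\leftarrow X^{+}}\,\|\mathcal{L}_{N}^{+}z^{\ast}-z^{\ast}\|_{X^{+}},$$ where $z^{\ast}\in X^{+}$ is the unique solution of $z=\mathcal{F}_{s}V(\phi,z)$.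
   Context: Let $d\ge 1$ be an integer and $\tau>0$, $h>0$ real. $X$, $X^{+}$, $X^{\pm}$ are real normed spaces of functions $[-\tau,0]\to\mathbb{R}^{d}$, $[0,h]\to\mathbb{R}^{d}$, $[-\tau,h]\to\mathbb{R}^{d}$, respectively. $V\colon X\times X^{+}\to X^{\pm}$ and $\mathcal{F}_{s}\colon X^{\pm}\to X^{+}$ are linear operators with $V(\phi,z)|_{[-\tau,0]}=\phi$; $V^{-}\phi:=V(\phi,0_{X^{+}})$, $V^{+}z:=V(0_{X},z)$, so $V(\phi,z)=V^{-}\phi+V^{+}z$. Let $\widetilde{X}^{+}$ be a linear subspace of $X^{+}$. For $N\in\mathbb{N}$, $X_{N}^{+}$ is a finite-dimensional space, $R_{N}^{+}\colon\widetilde{X}^{+}\to X_{N}^{+}$ and $P_{N}^{+}\colon X_{N}^{+}\to X^{+}$ are linear with $R_{N}^{+}P_{N}^{+}=I_{X_{N}^{+}}$, and $\mathcal{L}_{N}^{+}:=P_{N}^{+}R_{N}^{+}$. Hypotheses: (H1) $I_{X^{+}}-\mathcal{F}_{s}V^{+}\colon X^{+}\to X^{+}$ is invertible with bounded inverse, and for each $\phi\in X$ the equation $z=\mathcal{F}_{s}V(\phi,z)$ has a unique solution in $X^{+}$. There is a linear subspace $\widehat{X}^{+}\subseteq\widetilde{X}^{+}$ with a norm $\|\cdot\|_{\widehat{X}^{+}}$ making it complete such that: (H2.1) $\|(\mathcal{L}_{N}^{+}-I_{X^{+}})|_{\widehat{X}^{+}}\|_{X^{+}\leftarrow\widehat{X}^{+}}\to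 0$ as $N\to+\infty$; (H2.4) the range of $\mathcal{F}_{s}V^{+}\colon X^{+}\to X^{+}$ is contained in $\widehat{X}^{+}$ and $\mathcal{F}_{s}V^{+}\colon X^{+}\to\widehat{X}^{+}$ is bounded. There is a linear subspace $\widehat{X}\subseteq X$ with a norm making it complete such that: (H3.1) the range of $\mathcal{F}_{s}V^{-}|_{\widehat{X}}$ is contained in $\widehat{X}^{+}$ and $\mathcal{F}_{s}V^{-}|_{\widehat{X}}\colon\widehat{X}\to\widehat{X}^{+}$ is bounded. *)

(* Defs.v *)
From HB Require Import structures.
From mathcomp Require Import all_boot all_order all_algebra.
From mathcomp Require Import all_classical all_reals all_analysis.
Set Implicit Arguments. Unset Strict Implicit. Unset Printing Implicit Defensive.
Import Order.TTheory GRing.Theory Num.Theory.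
Import numFieldNormedType.Exports.
Local Open Scope classical_set_scope.
Local Open Scope ring_scope.

(* Operator norm  sup_{|x| <= 1} |f x|, valued in the extended reals
   (it is +oo exactly when f is unbounded on the unit ball). *)
Definition opnorm (R : realType) (U W : normedModType R) (f : U -> W) : \bar R :=
  ereal_sup [set (`|f x|)%:E | x in [set x : U | `|x| <= 1]].

Definition is_subspace (R : realType) (U : lmodType R) (S : set U) : Prop :=
  S 0 /\ forall (a : R) (x y : U), S x -> S y -> S (a *: x + y).

Definition linear_on (R : realType) (U W : lmodType R) (S : set U) (f : U -> W) : Prop :=
  forall (a : R) (x y : U), S x -> S y -> f (a *: x + y) = a *: f x + f y.

(* Main.v *)
Require Import Defs.
From HB Require Import structures.
From mathcomp Require Import all_boot all_order all_algebra.
From mathcomp Require Import all_classical all_reals all_analysis.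
Import Order.TTheory GRing.Theory Num.Theory.
Import numFieldNormedType.Exports.
Local Open Scope classical_set_scope.
Local Open Scope ring_scope.

Lemma opnorm_ge0 {R : realType} {U W : normedModType R} {f : U -> W} :
  (0 <= opnorm f)%E.
Proof.
rewrite /opnorm; apply: le_trans (ereal_sup_ubound _); last first.
  by exists 0; [rewrite /= normr0 | reflexivity].
by rewrite lee_fin.
Qed.

Lemma opnorm_le {R : realType} {U W : normedModType R} {f : U -> W} (c : R) :
  0 <= c -> (forall x, `|f x| <= c * `|x|) -> (opnorm f <= c%:E)%E.
Proof.
move=> c0 H; apply/ereal_supP => _ [x /= x1 <-]; rewrite lee_fin.
by apply: le_trans (H x) _; rewrite -[leRHS]mulr1 ler_wpM2l.
Qed.

Lemma opnorm_bnd {R : realType} {U W : normedModType R} {f : U -> W} :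
  (forall (a : R) x, f (a *: x) = a *: f x) -> (opnorm f < +oo)%E ->
  forall x, `|f x| <= fine (opnorm f) * `|x|.
Proof.
move=> Hs Hf x.
have f0 : f 0 = 0 by rewrite -(scale0r (0 : U)) Hs scale0r.
have [->|x0] := eqVneq x 0; first by rewrite f0 !normr0 mulr0.
have nx : 0 < `|x| by rewrite normr_gt0.
set u := `|x|^-1 *: x.
have nu : `|u| = 1 by rewrite /u normrZ normrV ?unitfE ?gt_eqF // ger0_norm ?ltW // mulVf ?gt_eqF.
have H : ((`|f u|)%:E <= opnorm f)%E.
  by apply: ereal_sup_ubound; exists u => //=; rewrite nu.
have fin : opnorm f \is a fin_num.
  by rewrite ge0_fin_numE ?opnorm_ge0.
rewrite -(fineK fin) lee_fin /u Hs normrZ normrV ?unitfE ?gt_eqF // (ger0_norm (ltW nx)) in H.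
have nxi : 0 < `|x|^-1 by rewrite invr_gt0.
rewrite mulrC -(ler_pM2l nxi) mulrA mulVf ?gt_eqF // mul1r; exact: H.
Qed.

Lemma fixpt (R : realType) (X : completeNormedModType R) (T : X -> X) (q : R) :
  0 <= q -> q < 1 -> (forall x y, `|T x - T y| <= q * `|x - y|) -> exists x, x = T x.
Proof.
move=> q0 q1 HT.
have ctr : is_contraction (totalfun T).
  exists (NngNum q0); split => //=.
  by move=> [x y] _ /=; apply: HT.
have [p _ Hp] := @banach_fixed_point R X setT (totalfun T) ctr closedT (ex_intro _ 0 I).
by exists p.
Qed.

From mathcomp Require Import lra.

Lemma linB {R : realType} {U W : lmodType R} {f : U -> W} :
  (forall a x y, f (a *: x + y) = a *: f x + f y) -> forall x y, f (x - y) = f x - f y.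
Proof. by move=> Hf x y; rewrite addrC -scaleN1r Hf scaleN1r addrC. Qed.

Lemma linD {R : realType} {U W : lmodType R} {f : U -> W} :
  (forall a x y, f (a *: x + y) = a *: f x + f y) -> forall x y, f (x + y) = f x + f y.
Proof. by move=> Hf x y; rewrite -[x]scale1r Hf !scale1r. Qed.

Lemma linZ {R : realType} {U W : lmodType R} {f : U -> W} :
  (forall a x y, f (a *: x + y) = a *: f x + f y) -> forall a x, f (a *: x) = a *: f x.
Proof.
move=> Hf a x; have f0 : f 0 = 0 by rewrite -(subrr (0:U)) (linB Hf) subrr.
by rewrite -[a *: x]addr0 Hf f0 addr0.
Qed.

Lemma perturb (R : realType) (Xp : normedModType R) (Xh : completeNormedModType R)
  (P : Xh -> Xp) (Q : Xp -> Xh) (p r : R) :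
  (forall a x y, P (a *: x + y) = a *: P x + P y) ->
  (forall a x y, Q (a *: x + y) = a *: Q x + Q y) ->
  0 <= p -> 0 <= r -> p * r <= 2^-1 ->
  (forall h, `|P h| <= p * `|h|) -> (forall z, `|Q z| <= r * `|z|) ->
  exists S : Xp -> Xp, (forall z, S (z - P (Q z)) = z) /\
    (forall y, S y - P (Q (S y)) = y) /\ (forall y, `|S y| <= 2 * `|y|).
Proof.
move=> HP HQ p0 r0 pr HPb HQb.
have PB := linB HP; have QB := linB HQ; have QD := linD HQ.
have rp0 : 0 <= r * p by rewrite mulr_ge0.
have rp1 : r * p <= 2^-1 by rewrite mulrC.
have lip x y : `|(Q (P x)) - (Q (P y))| <= (r * p) * `|x - y|.
  rewrite -QB -PB -mulrA; apply: le_trans (HQb _) _.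
  by apply: ler_wpM2l => //; apply: HPb.
have Hfix y : exists h, h = Q y + Q (P h).
  apply: (@fixpt R Xh _ (r * p)) => //; first lra.
  move=> a b; have -> : Q y + Q (P a) - (Q y + Q (P b)) = Q (P a) - Q (P b).
    by rewrite opprD addrACA subrr add0r.
  exact: lip.
case: (choice Hfix) => hy Hhy.
have uniq y h : h = Q y + Q (P h) -> h = hy y.
  move=> Hh; apply/eqP; rewrite -subr_eq0 -normr_eq0; apply/eqP.
  have E : h - hy y = Q (P h) - Q (P (hy y)).
    by rewrite {1}Hh {1}(Hhy y) opprD addrACA subrr add0r.
  have := lip h (hy y); rewrite -E.
  have [d1 d2] : 0 <= `|h - hy y| /\ `|h - hy y| = `|h - hy y| by [].
  move: (`|h - hy y|) d1 => d d0 H.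
  have : (r * p) * d <= 2^-1 * d by apply: ler_wpM2r.
  lra.
exists (fun y => y + P (hy y)); split; [|split].
- move=> z /=; have E : Q z = hy (z - P (Q z)).
    by apply: uniq; rewrite QB subrK.
  by rewrite -E subrK.
- move=> y /=; rewrite QD -Hhy; exact: addrK.
- move=> y /=; set s := y + P (hy y).
  have Es : s - P (Q s) = y by rewrite /s QD -Hhy addrK.
  have Hs : `|s| <= `|y| + `|P (Q s)|.
    by rewrite -{1}(subrK (P (Q s)) s) Es ler_normD.
  have H1 : `|P (Q s)| <= p * (r * `|s|).
    by apply: le_trans (HPb _) _; apply: ler_wpM2l => //; apply: HQb.
  have H2 : (p * r) * `|s| <= 2^-1 * `|s| by apply: ler_wpM2r.
  rewrite mulrA in H1; lra.
Qed.

Lemma zm (V : zmodType) (z u au la az : V) : u - au = la - az -> (z - u) - (az - au) = z - la.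
Proof.
move=> h; have -> : la = u - au + az by rewrite h subrK.
by rewrite !opprD !opprK !addrA addrAC.
Qed.

Lemma zm2 (V : zmodType) (w zs a b : V) : (w - zs) - (a - b) = (w - a + b) - zs.
Proof.
rewrite opprB !addrA (addrAC w) [LHS]addrAC; congr (_ - _); exact: addrAC.
Qed.

Theorem proposition4p3 (R : realType)
  (X Xp Xpm : normedModType R)
  (V : {linear (X * Xp)%type -> Xpm})
  (Fs : {linear Xpm -> Xp})
  (Xt : set Xp) (HXt : is_subspace Xt)
  (XN : nat -> vectType R)
  (RN : forall N : nat, Xp -> XN N)
  (PN : forall N : nat, {linear XN N -> Xp})
  (HRN : forall N, linear_on Xt (RN N))
  (HPN : forall N (y : XN N), Xt (PN N y))
  (HRP : forall N (y : XN N), RN N (PN N y) = y)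
  (* (H1) *)
  (Binv : Xp -> Xp)
  (HB1 : forall z : Xp, Binv (z - Fs (V (0, z))) = z)
  (HB2 : forall z : Xp, Binv z - Fs (V (0, Binv z)) = z)
  (HBb : (opnorm Binv < +oo)%E)
  (H1u : forall phi : X, exists! z : Xp, z = Fs (V (phi, z)))
  (* the space \widehat{X}^+ *)
  (Xh : completeNormedModType R) (iota : {linear Xh -> Xp})
  (Hiota_inj : injective iota) (Hiota_t : forall h : Xh, Xt (iota h))
  (* (H2.1) *)
  (H21 : (fun N : nat => opnorm (fun h : Xh => PN N (RN N (iota h)) - iota h))
           @ \oo --> 0%E)
  (* (H2.4) *)
  (H24 : exists G : {linear Xp -> Xh},
           (opnorm G < +oo)%E /\ forall z : Xp, iota (G z) = Fs (V (0, z)))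
  (* the space \widehat{X} *)
  (Xh0 : completeNormedModType R) (iX : {linear Xh0 -> X})
  (HiX_inj : injective iX)
  (* (H3.1) *)
  (H31 : exists G3 : {linear Xh0 -> Xh},
           (opnorm G3 < +oo)%E /\ forall psi : Xh0, iota (G3 psi) = Fs (V (iX psi, 0))) :
  exists N0 : nat, (0 < N0)%N /\ forall N : nat, (N0 <= N)%N ->
    (exists Ainv : Xp -> Xp,
        (forall z : Xp, Ainv (z - PN N (RN N (Fs (V (0, z))))) = z) /\
        (forall z : Xp, Ainv z - PN N (RN N (Fs (V (0, Ainv z)))) = z) /\
        (opnorm Ainv <= 2%:E * opnorm Binv)%E) /\
    forall psi : Xh0,
      (exists! w : Xp, w = PN N (RN N (Fs (V (iX psi, w))))) /\
      forall w zs : Xp,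
        w = PN N (RN N (Fs (V (iX psi, w)))) ->
        zs = Fs (V (iX psi, zs)) ->
        ((`|w - zs|)%:E <= 2%:E * opnorm Binv * (`|PN N (RN N zs) - zs|)%:E)%E.


Proof.
pose A z := Fs (V (0, z)).
have HB1' : forall z, Binv (z - A z) = z := HB1.
have HB2' : forall z, Binv z - A (Binv z) = z := HB2.
have AL : forall a x y, A (a *: x + y) = a *: A x + A y.
  move=> a x y; rewrite /A.
  have -> : ((0 : X), a *: x + y) = a *: (0, x) + (0, y) :> (X * Xp)%type.
    by congr (_, _); rewrite /= scaler0 addr0.
  by rewrite !linearP.
have VS phi z : Fs (V (phi, z)) = Fs (V (phi, 0)) + A z.
  rewrite /A -linearD -linearD /=.
  by congr (Fs (V _)); congr (_, _); rewrite /= ?addr0 ?add0r.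
have BL : forall a x y, Binv (a *: x + y) = a *: Binv x + Binv y.
  move=> a x y; set z := a *: Binv x + Binv y.
  have E : z - A z = a *: x + y.
    by rewrite /z AL opprD addrACA -scalerBr !HB2'.
  by rewrite -E HB1'.
pose b := fine (opnorm Binv).
have b0 : 0 <= b by apply: fine_ge0; apply: opnorm_ge0.
have bE : opnorm Binv = b%:E.
  by rewrite /b fineK // ge0_fin_numE ?opnorm_ge0.
have Bbnd : forall y, `|Binv y| <= b * `|y|.
  exact: (opnorm_bnd (linZ BL) HBb).
case: H24 => G [HGb HG].
have GL : forall a x y, G (a *: x + y) = a *: G x + G y by move=> a x y; rewrite linearP.
pose g := fine (opnorm G).
have g0 : 0 <= g by apply: fine_ge0; apply: opnorm_ge0.
have Gbnd : forall y, `|G y| <= g * `|y|.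
  exact: (opnorm_bnd (linZ GL) HGb).
case: H31 => G3 [_ HG3].
pose L N z := PN N (RN N z).
pose EN N := fun h : Xh => L N (iota h) - iota h.
pose eps := 2^-1 / (b * g + 1).
have bg0 : 0 <= b * g by rewrite mulr_ge0.
have eps0 : 0 < eps by rewrite /eps divr_gt0 // ltr_wpDl.
have epsE : eps * (b * g) + eps = 2^-1.
  by rewrite /eps -{2}(mulr1 (_ / _)) -mulrDr mulfVK // gt_eqF // ltr_wpDl.
have [N1 _ HN1] : \forall N \near \oo, (opnorm (EN N) < eps%:E)%E.
  move/fine_cvgP: H21 => [Hfin Hc].
  have Hl := cvgr_lt _ Hc eps eps0.
  near=> N.
  have Hf : opnorm (EN N) \is a fin_num by near: N; exact: Hfin.
  rewrite -(fineK Hf) lte_fin.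
  by near: N; exact: Hl.
exists N1.+1; split => // N HN.
have {}HN : (opnorm (EN N) < eps%:E)%E by apply: HN1 => /=; apply: ltnW.
have Xt0 : Xt 0 := HXt.1.
have XtL : forall a x y, Xt x -> Xt y -> Xt (a *: x + y) := HXt.2.
have XtA : forall z, Xt (A z) by move=> z; rewrite /A -HG.
have LL : forall a x y, Xt x -> Xt y -> L N (a *: x + y) = a *: L N x + L N y.
  by move=> a x y hx hy; rewrite /L HRN // linearP.
have L0 : L N 0 = 0.
  by have := LL (-1) 0 0 Xt0 Xt0; rewrite !scaleN1r oppr0 add0r addNr.
have LD : forall x y, Xt x -> Xt y -> L N (x + y) = L N x + L N y.
  by move=> x y hx hy; have := LL 1 x y hx hy; rewrite !scale1r.
have LB : forall x y, Xt x -> Xt y -> L N (x - y) = L N x - L N y.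
  by move=> x y hx hy; rewrite addrC -scaleN1r LL // scaleN1r addrC.
have AB := linB AL.
pose eN := fine (opnorm (EN N)).
have eN0 : 0 <= eN by apply: fine_ge0; apply: opnorm_ge0.
have ENfin : opnorm (EN N) \is a fin_num.
  by rewrite ge0_fin_numE ?opnorm_ge0 // (lt_trans HN (ltry _)).
have eNe : eN <= eps.
  by rewrite -lee_fin /eN fineK //; exact: ltW.
have ENL : forall a u v, EN N (a *: u + v) = a *: EN N u + EN N v.
  by move=> a u v; rewrite /EN linearP LL // opprD addrACA -scalerBr.
have ENb : forall h, `|EN N h| <= eN * `|h|.
  exact: (opnorm_bnd (linZ ENL) (lt_trans HN (ltry _))).
pose P h := Binv (EN N h).
have PL : forall a x y, P (a *: x + y) = a *: P x + P y.
  by move=> a x y; rewrite /P ENL BL.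
have Pb : forall h, `|P h| <= (b * eN) * `|h|.
  move=> h; apply: le_trans (Bbnd _) _; rewrite -mulrA; apply: ler_wpM2l => //.
have pr : (b * eN) * g <= 2^-1.
  rewrite mulrAC; have : b * g * eN <= b * g * eps by apply: ler_wpM2l.
  have := ltW eps0; lra.
have [S [HS1 [HS2 HS3]]] := @perturb R Xp Xh P G (b * eN) g PL GL (mulr_ge0 b0 eN0) g0 pr Pb Gbnd.
have C : forall z, (z - P (G z)) - A (z - P (G z)) = z - L N (A z).
  move=> z.
  have K1 : P (G z) - A (P (G z)) = L N (A z) - A z.
    by rewrite /P HB2' /EN HG.
  by rewrite AB; apply: zm.
pose Ainv y := S (Binv y).
have eq1 z : Ainv (z - L N (A z)) = z by rewrite /Ainv -C HB1' HS1.
have eq2 y : Ainv y - L N (A (Ainv y)) = y by rewrite /Ainv -C HS2 HB2'.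
have Ab y : `|Ainv y| <= (2 * b) * `|y|.
  apply: le_trans (HS3 _) _; rewrite -mulrA; apply: ler_wpM2l => //.
split.
  exists Ainv; split; first exact: eq1.
  split; first exact: eq2.
  rewrite bE -EFinM; apply: opnorm_le; first exact: mulr_ge0.
  exact: Ab.
move=> psi; pose c := iota (G3 psi).
have Vc w : Fs (V (iX psi, w)) = c + A w by rewrite VS /c HG3.
have Xc : Xt c := Hiota_t _.
have LcA w : L N (c + A w) = L N c + L N (A w) := LD _ _ Xc (XtA w).
have solve w : w = PN N (RN N (Fs (V (iX psi, w)))) <-> w - L N (A w) = L N c.
  rewrite Vc; change (w = L N (c + A w) <-> w - L N (A w) = L N c).
  rewrite LcA; split => h; apply/eqP.
    by rewrite subr_eq; apply/eqP.
  by rewrite -subr_eq; apply/eqP.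
split.
  exists (Ainv (L N c)); split; first by apply/solve; exact: eq2.
  by move=> w /solve h; rewrite -h eq1.
move=> w zs /solve hw hz.
have Lz : L N zs = L N c + L N (A zs) by rewrite {1}hz Vc LcA.
have M : (w - zs) - L N (A (w - zs)) = L N zs - zs.
  by rewrite AB LB ?XtA // Lz -hw zm2.
have E : w - zs = Ainv (L N zs - zs) by rewrite -M eq1.
rewrite E bE -!EFinM lee_fin; exact: Ab.
Unshelve. all: end_near.
Qed.
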